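(* Let $n\geqslant0$, $q=3^{2n+1}$, $A=\{\alpha-\alpha^{3^{n+1}}:\alpha\in\mathbb{F}_q\}$, and for $t\in\mathbb{F}_q$ let $tA=\{ta:a\in A\}$. Let $T\subseteq\mathbb{F}_q^\times$, $T^{-1}=\{t^{-1}:t\in T\}$, and let $\mathrm{span}_{\mathbb{F}_3}(T^{-1})$ be the $\mathbb{F}_3$-subspace of $\mathbb{F}_q$ spanned by $T^{-1}$. Then $$\bigcap_{t\in T}tA=\bigcap_{0\neq s\in\mathrm{span}_{\mathbb{F}_3}(T^{-1})}s^{-1}A.$$
   Context: $A$ is an $\mathbb{F}_3$-subspace of $\mathbb{F}_q$ (it equals the kernel of the trace map $\mathbb{F}_q\to\mathbb{F}_3$). An intersection over an empty index set is taken to be $\mathbb{F}_q$. *)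

(* Defs.v *)
From HB Require Import structures.
From mathcomp Require Import all_boot all_order all_algebra all_field.
Set Implicit Arguments. Unset Strict Implicit. Unset Printing Implicit Defensive.
Import GRing.Theory.
Local Open Scope ring_scope.

Definition Aset (F : finFieldType) (n : nat) : {set F} :=
  [set x - x ^+ (3 ^ n.+1)%N | x : F].

Definition scale_set (F : finFieldType) (t : F) (B : {set F}) : {set F} :=
  [set t * b | b in B].

Definition inv_set (F : finFieldType) (T : {set F}) : {set F} :=
  [set t^-1 | t in T].

(* F_3-span of S: all linear combinations with coefficients in the prime
   field F_3 = {0, 1, 2} (embedded via the nat cast %:R). *)
Definition span3 (F : finFieldType) (S : {set F}) : {set F} :=
  [set \sum_(s in S) ((c s : nat)%:R * s) | c : {ffun F -> 'I_3}].

(* Main.v *)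
Require Import Defs.
From HB Require Import structures.
From mathcomp Require Import all_boot all_order all_algebra all_field.
Import GRing.Theory.
Local Open Scope ring_scope.

Section S.
Variables (n : nat) (F : finFieldType).
Hypothesis hF : #|F| = (3 ^ (2 * n + 1))%N.

Lemma ch3 : (3%N \in [pchar F]).
Proof. exact: (card_finPcharP hF). Qed.

Lemma expD (x y : F) : (x + y) ^+ (3 ^ n.+1)%N = x ^+ (3 ^ n.+1)%N + y ^+ (3 ^ n.+1)%N.
Proof.
apply: exprDn_pchar.
have /pcharf_eq E := ch3.
rewrite (eq_pnat _ E); exact: pnatX.
Qed.

Lemma A0 : (0 : F) \in Aset F n.
Proof. by apply/imsetP; exists 0 => //; rewrite expr0n expn_eq0 /= subr0. Qed.

Lemma AD (x y : F) : x \in Aset F n -> y \in Aset F n -> x + y \in Aset F n.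
Proof.
move=> /imsetP[a _ ->] /imsetP[b _ ->]; apply/imsetP; exists (a + b) => //.
by rewrite expD opprD !addrA; congr (_ + _); rewrite -!addrA; congr (_ + _); rewrite addrC.
Qed.

Lemma scaleP (s x : F) : s != 0 -> (x \in scale_set s (Aset F n)) = (s^-1 * x \in Aset F n).
Proof.
move=> s0; apply/imsetP/idP => [[b Hb ->]|H].
  by rewrite mulrA mulVf // mul1r.
by exists (s^-1 * x) => //; rewrite mulrA mulfV // mul1r.
Qed.
End S.

Theorem lemma4p1 (n : nat) (F : finFieldType)
  (hF : #|F| = (3 ^ (2 * n + 1))%N) (T : {set F}) (hT : 0 \notin T) :
  \bigcap_(t in T) scale_set t (Aset F n)
  = \bigcap_(s in span3 (inv_set T) | s != 0) scale_set s^-1 (Aset F n).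
Proof.
have tn0 t : t \in T -> t != 0 by move=> tT; apply: contraNneq hT => <-.
apply/setP => x; apply/bigcapP/bigcapP.
- move=> H s /andP[/imsetP[c _ ->] s0].
  rewrite scaleP ?invr_eq0 // invrK.
  rewrite mulr_suml; apply: (big_ind (fun y => y \in Aset F n)).
  + exact: A0.
  + exact: AD.
  move=> u /imsetP[t tT ->].
  have := H t tT; rewrite scaleP ?tn0 // => Ht.
  rewrite -mulrA mulr_natl; elim: (nat_of_ord (c t^-1)) => [|k IH].
    by rewrite mulr0n; exact: A0.
  by rewrite mulrS; apply: AD.
- move=> H t tT.
  have ti : t^-1 \in span3 (inv_set T).
    apply/imsetP; exists [ffun s => if s == t^-1 then (1 : 'I_3) else 0] => //.
    rewrite (bigD1 t^-1) /=; last by apply/imsetP; exists t.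
    rewrite ffunE eqxx big1 ?addr0 ?mul1r // => s /andP[_ /negbTE E].
    by rewrite ffunE E mul0r.
  have := H _ (introT andP (conj ti _)); rewrite invrK; apply.
  by rewrite invr_eq0 tn0.
Qed.
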